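(* In the setting below, for every $\ell\ge1$, $$\operatorname{rank}(q_\ell\otimes k)=\binom{n+\ell-1}{\ell}\binom{m-n}{\ell},$$ with the convention $\binom{a}{b}=0$ if $b>a$ (so $q_\ell\otimes k=0$ for $\ell\ge m-n+1$).
   Context: Setting: $R=k[x_{ij}\mid1\le i\le n,1\le j\le m]$ over a field $k$, $n\le m$; $F$ free with basis $f_1,\dots,f_m$, $G$ free with basis $g_1,\dots,g_n$, dual basis $g_i^*$; $D_\ell(G^* )$ the divided power with basis $g^{*(\alpha)}=g_1^{*(\alpha_1)}\cdots g_n^{*(\alpha_n)}$, $|\alpha|=\ell$. Fix $\sigma=(\sigma_1<\dots<\sigma_n)\subseteq[m]$, $f_\sigma=f_{\sigma_1}\wedge\cdots\wedge f_{\sigma_n}$. $U$ is free with basis $e_{ij}$, $1\le i\le n$, $j\notin\sigma$, $e_{(i,j)}=e_{ij}$. For $\tau=(\tau_1<\dots<\tau_\ell)$ and $\alpha\in\mathbb Z^n_{\ge 0}$, $\mathcal L_{\alpha,\tau}$ is the set of sets $L=\{(r_1,\tau_1),\dots,(r_\ell,\tau_\ell)\}$ with $r_s\in\{i:\alpha_i\neq 0\}$ and $|\{s:r_s=j\}|=\alpha_j$ for all $j$, written $L=(L_1,\dots,L_\ell)$, $L_s=(r_s,\tau_s)$. The map $q_\ell:D_\ell(G^* )\otimes\bigwedge^{n+\ell}F\to\bigwedge^\ell U$ sends $g^{*(\alpha)}\otimes f_{\tau_1}\wedge\cdots\wedge f_{\tau_\ell}\wedge f_\sigma\mapsto\sum_{L\in\mathcal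 L_{\alpha,\tau}}e_{L_1}\wedge\cdots\wedge e_{L_\ell}$ for $\tau\cap\sigma=\varnothing$, $|\alpha|=\ell$, and sends each basis element $g^{*(\alpha)}\otimes f_\rho$ with $\rho\not\supseteq\sigma$ to $0$. *)

(* Defs.v *)
From HB Require Import structures.
From mathcomp Require Import all_boot all_order all_algebra.

Import GRing.Theory.
Local Open Scope ring_scope.

(* Index sets are 0-based: [n] = 'I_n, [m] = 'I_m.  sigma : {set 'I_m}, #|sigma| = n.

   Basis of D_l(G^* ) (x) /\^{n+l} F : pairs (alpha, rho) with
     alpha : 'I_n -> nat (stored in 'I_l.+1), sum alpha = l   (g^{*(alpha)})
     rho   : subset of [m] of size n+l                        (f_rho, wedge in increasing order)
   Basis of /\^l U : subsets S of {(i,j) : j \notin sigma} of size l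
     (e_S = wedge of its elements listed in increasing order of j, ties by i;
      U's basis e_{ij} is thus ordered by (j,i)). *)

Definition dom_ok (n m l : nat) (p : {ffun 'I_n -> 'I_l.+1} * {set 'I_m}) : bool :=
  ((\sum_(i < n) (p.1 i : nat))%N == l) && (#|p.2| == n + l)%N.

Definition cod_ok (n m l : nat) (sigma : {set 'I_m}) (S : {set 'I_n * 'I_m}) : bool :=
  (#|S| == l)%N && [forall x in S, x.2 \notin sigma].

Definition dom_idx (n m l : nat) := {p : {ffun 'I_n -> 'I_l.+1} * {set 'I_m} | dom_ok n m l p}.
Definition cod_idx (n m l : nat) (sigma : {set 'I_m}) :=
  {S : {set 'I_n * 'I_m} | cod_ok n m l sigma S}.

(* L \in \mathcal L_{alpha,tau}: L a set of pairs (r_s, tau_s), exactly one for each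
   tau_s in tau and none with second coordinate outside tau, with
   |{s : r_s = i}| = alpha_i for every i. *)
Definition in_Lset (n m l : nat) (alpha : {ffun 'I_n -> 'I_l.+1}) (tau : {set 'I_m})
  (L : {set 'I_n * 'I_m}) : bool :=
  [forall j : 'I_m, #|[set i | (i, j) \in L]| == (j \in tau : nat)] &&
  [forall i : 'I_n, #|[set j | (i, j) \in L]| == (alpha i : nat)].

(* f_rho = (-1)^(number of pairs s < t, s in sigma, t in tau) f_tau /\ f_sigma,
   where tau = rho \ sigma (when sigma \subset rho). *)
Definition wedge_sign (k : ringType) (m : nat) (tau sigma : {set 'I_m}) : k :=
  (-1) ^+ #|[set p : 'I_m * 'I_m | (p.1 \in tau) && (p.2 \in sigma) && (p.2 < p.1)%N]|.

(* The coefficient of e_S in q_l(g^{*(alpha)} (x) f_rho).  Since e_{L_1} /\ ... /\ e_{L_l}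
   (listed with tau_1 < ... < tau_l) is already in the (j,i)-increasing order,
   it equals the basis vector e_L. *)
Definition q_coef (k : ringType) (n m l : nat) (sigma : {set 'I_m})
  (alpha : {ffun 'I_n -> 'I_l.+1}) (rho : {set 'I_m}) (S : {set 'I_n * 'I_m}) : k :=
  if sigma \subset rho then
    wedge_sign k m (rho :\: sigma) sigma *
    \sum_(L : {set 'I_n * 'I_m} | in_Lset n m l alpha (rho :\: sigma) L) (L == S)%:R
  else 0.

Definition q_mx (k : ringType) (n m l : nat) (sigma : {set 'I_m}) :
  'M[k]_(#|{: dom_idx n m l}|, #|{: cod_idx n m l sigma}|) :=
  \matrix_(a, b)
    q_coef k n m l sigma (val (enum_val a)).1 (val (enum_val a)).2 (val (enum_val b)).

(* Main.v *)
Require Import Defs.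
From HB Require Import structures.
From mathcomp Require Import all_boot all_order all_algebra.
Import GRing.Theory.
Local Open Scope ring_scope.

Lemma coef_nz (k : fieldType) n m l sigma alpha rho S :
  (q_coef k n m l sigma alpha rho S != 0) =
  (sigma \subset rho) && in_Lset n m l alpha (rho :\: sigma) S.
Proof.
rewrite /q_coef; case: ifP => _ /=; last by rewrite eqxx.
set P := in_Lset _ _ _ _ _.
have -> : \sum_(L | P L) (L == S)%:R = (P S)%:R :> k.
  case: (boolP (P S)) => HS.
    rewrite (bigD1 S) //= eqxx big1 ?addr0 // => L /andP[_ nL].
    by rewrite (negbTE nL).
  rewrite big1 // => L PL; case: eqP => // E.
  by move: HS; rewrite -E PL.
rewrite mulf_eq0 negb_or /wedge_sign expf_neq0 ?oppr_eq0 ?oner_eq0 //=.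
by case: (P S); rewrite ?oner_eq0 ?eqxx.
Qed.

Lemma Lset_uniq n m l (al al' : {ffun 'I_n -> 'I_l.+1}) tau tau' S :
  in_Lset n m l al tau S -> in_Lset n m l al' tau' S -> al = al' /\ tau = tau'.
Proof.
move=> /andP[/forallP H1 /forallP H2] /andP[/forallP H3 /forallP H4]; split.
  apply/ffunP => i; apply: val_inj => /=.
  by rewrite -(eqP (H2 i)) (eqP (H4 i)).
apply/setP => j; have := eqP (H1 j); rewrite (eqP (H3 j)).
by case: (j \in tau); case: (j \in tau').
Qed.

Lemma rho_eq m (sigma r1 r2 : {set 'I_m}) :
  sigma \subset r1 -> sigma \subset r2 -> r1 :\: sigma = r2 :\: sigma -> r1 = r2.
Proof.
move=> /subsetP s1 /subsetP s2 E; apply/setP => x; have := congr1 (fun A : {set 'I_m} => x \in A) E; rewrite /= !inE.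
case xs: (x \in sigma) => //= _.
by rewrite (s1 _ xs) (s2 _ xs).
Qed.

Lemma card_enum_val (T : finType) (P : pred T) :
  #|[set a : 'I_#|T| | P (enum_val a)]| = #|[set x | P x]|.
Proof.
rewrite -(card_imset _ (@enum_val_inj _ _)); apply: eq_card => x; rewrite inE.
apply/imsetP/idP => [[a]|Px]; first by rewrite inE => H ->.
by exists (enum_rank x); rewrite ?inE enum_rankK.
Qed.

Lemma card_sub_set (T : finType) (P Q : pred T) :
  #|[set x : {x | P x} | Q (val x)]| = #|[set x | P x && Q x]|.
Proof.
rewrite -(card_imset _ val_inj); apply: eq_card => x; rewrite inE.
apply/imsetP/andP => [[y]|[Px Qx]]; first by rewrite inE => Qy ->; split=> //; exact: valP.
by exists (exist _ x Px); rewrite ?inE.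
Qed.

Lemma card_alpha n l : (1 <= l)%N ->
  #|[set al : {ffun 'I_n -> 'I_l.+1} | (\sum_i (al i : nat))%N == l]| = 'C(n + l - 1, l).
Proof.
move=> hl; case: n => [|n].
  rewrite bin_small; last by rewrite add0n subn1 ltn_predL.
  apply: eq_card0 => al; rewrite !inE big_ord0.
  by apply/negbTE; rewrite eq_sym -lt0n.
have -> : (n.+1 + l - 1 = n + l)%N by rewrite addSn subn1.
rewrite -(bin_sub (leq_addl n l)) addnK -card_ord_partitions.
rewrite -(card_imset _ (f := fun al : {ffun 'I_n.+1 -> 'I_l.+1} => [tuple al i | i < n.+1])); last first.
  move=> a1 a2 E; apply/ffunP => i.
  by have := congr1 (fun t => tnth t i) E; rewrite /= !tnth_mktuple.
apply: eq_card => t; rewrite inE.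
apply/imsetP/idP => [[al]|Ht].
  rewrite inE => H ->; rewrite big_tuple.
  by under eq_bigr do rewrite tnth_mktuple.
exists [ffun i => tnth t i].
  by rewrite inE; move: Ht; rewrite big_tuple; under eq_bigr do rewrite ffunE.
by apply: eq_from_tnth => i; rewrite tnth_mktuple ffunE.
Qed.
Lemma rank_disj (F : fieldType) p q (A : 'M[F]_(p,q)) :
 (forall i i' j, A i j != 0 -> A i' j != 0 -> i = i') ->
 \rank A = #|[set i | [exists j, A i j != 0]]|.
Proof.
move=> Hd; set G := [set i | [exists j, A i j != 0]].
pose g (k : 'I_#|G|) : 'I_p := enum_val k.
have gG k : g k \in G by exact: enum_valP.
have ginj : injective g by exact: enum_val_inj.
have hex k : exists j, A (g k) j != 0 by have := gG k; rewrite inE => /existsP.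
pose f k := xchoose (hex k).
have fP k : A (g k) (f k) != 0 by exact: (xchooseP (hex k)).
apply/eqP; rewrite eqn_leq; apply/andP; split.
  pose P : 'M[F]_(p, #|G|) := \matrix_(i, k) ((i == g k)%:R).
  have -> : A = P *m rowsub g A.
    apply/matrixP=> i j; rewrite !mxE.
    case: (boolP (i \in G)) => Hi.
      pose k0 := enum_rank_in Hi i.
      have gk0 : g k0 = i by rewrite /g /k0 enum_rankK_in.
      rewrite (bigD1 k0) //= big1 ?addr0.
        by rewrite !mxE gk0 eqxx mul1r.
      move=> k nk; rewrite !mxE; case: eqP => [E|]; last by rewrite mul0r.
      by case/eqP: nk; apply: ginj; rewrite -E gk0.
    rewrite big1.
      move: Hi; rewrite inE negb_exists => /forallP /(_ j).
      by rewrite negbK => /eqP.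
    move=> k _; rewrite !mxE; case: eqP => [E|]; last by rewrite mul0r.
    by move: Hi; rewrite E gG.
  by apply: leq_trans (mxrankM_maxr _ _) (rank_leq_row _).
pose M := colsub f (rowsub g A).
have HMr : (\rank M <= \rank A)%N.
  have -> : M = rowsub g 1%:M *m A *m colsub f 1%:M.
    by rewrite mulmx_colsub mulmx1 -rowsubE.
  apply: leq_trans (mxrankM_maxl _ _) _; exact: mxrankM_maxr.
have HM : M = diag_mx (\row_k M k k).
  apply/matrixP=> k k'; rewrite !mxE; case: eqP => [->|nk]; first by rewrite mulr1n.
  rewrite mulr0n; apply/eqP; apply/negPn/negP => H.
  by apply: nk; apply: ginj; apply: Hd H (fP k').
rewrite -(@mxrank_unit _ _ M); last first.
  rewrite unitmxE HM det_diag unitfE; rewrite prodf_seq_neq0.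
  by apply/allP=> k _; rewrite !mxE fP.
exact: HMr.
Qed.
Lemma card_fiber_sum (I J : finType) (L : {set I * J}) :
  #|L| = (\sum_i #|[set j | (i, j) \in L]|)%N.
Proof.
rewrite -sum1_card.
rewrite (eq_bigr (fun i => \sum_(j | (i, j) \in L) 1)%N); last first.
  by move=> i _; rewrite sum1dep_card; apply: eq_card => j; rewrite inE.
rewrite pair_big_dep /=; apply: eq_bigl => -[i j] /=; by [].
Qed.

Lemma exL (n m : nat) (a : 'I_n -> nat) (A : {set 'I_m}) :
  #|A| = (\sum_i a i)%N -> exists L : {set 'I_n * 'I_m},
  (forall j, #|[set i | (i, j) \in L]| = (j \in A) :> nat) /\
  (forall i, #|[set j | (i, j) \in L]| = a i).
Proof.
move: {2}#|A| (erefl #|A|) => N; elim: N A a => [|N IH] A a hA hs.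
  have A0 : A = set0 by apply: cards0_eq.
  have a0 i : a i = 0%N.
    by apply/eqP; move: hs; rewrite hA => /esym/eqP; rewrite sum_nat_eq0 => /forallP /(_ i) /implyP; apply.
  exists set0; split=> [j|i]; first by rewrite A0 inE /= -(cards0 'I_n); apply: eq_card => i; rewrite !inE.
  by rewrite a0 -(cards0 'I_m); apply: eq_card => j; rewrite !inE.
have [x xA] : exists x, x \in A by apply/set0Pn; rewrite -card_gt0 hA.
have [i0 Hi0] : exists i0, (0 < a i0)%N.
  case: (pickP (fun i => 0 < a i)%N) => [i0 H|H]; first by exists i0.
  by move: hs; rewrite big1 ?hA // => i _; apply/eqP; rewrite -leqn0 leqNgt H.
pose a' i := (a i - (i == i0))%N.
have hA' : #|A :\ x| = N by move: hA; rewrite (cardsD1 x A) xA add1n => -[].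
have hs' : #|A :\ x| = (\sum_i a' i)%N.
  have e : (\sum_i a i = (\sum_i a' i).+1)%N.
    rewrite (bigD1 i0) //= [X in _ = X.+1](bigD1 i0) //= /a' eqxx subn1.
    rewrite [X in _ = (_ + X).+1](eq_bigr a); last by move=> i /negbTE ->; rewrite subn0.
    by rewrite -addSn prednK.
  by apply/eqP; rewrite -eqSS -e -hs hA hA'.
have [L' [H1 H2]] := IH (A :\ x) a' hA' hs'.
have nx i : (i, x) \notin L'.
  apply/negP => Hi; have := H1 x; rewrite !inE eqxx /=.
  by move/cards0_eq/setP/(_ i); rewrite !inE Hi.
exists ((i0, x) |: L'); split=> [j|i].
  case: (eqVneq j x) => [->|njx].
    rewrite xA /= -(cards1 i0); apply: eq_card => i; rewrite !inE xpair_eqE eqxx andbT.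
    by rewrite (negbTE (nx i)) orbF.
  rewrite -[in RHS](_ : (j \in A :\ x) = (j \in A)); last by rewrite !inE njx.
  rewrite -H1; apply: eq_card => i; rewrite !inE xpair_eqE (negbTE njx) andbF //.
case: (eqVneq i i0) => [->|nii].
  have -> : [set j | (i0, j) \in (i0, x) |: L'] = x |: [set j | (i0, j) \in L'].
    by apply/setP => j; rewrite !inE xpair_eqE eqxx.
  rewrite cardsU1 inE (negbTE (nx i0)) H2 /a' eqxx add1n subn1 prednK //.
rewrite -[a i](_ : a' i = a i); last by rewrite /a' (negbTE nii) subn0.
rewrite -H2; apply: eq_card => j; rewrite !inE xpair_eqE (negbTE nii) //.
Qed.
Lemma card_rho m n l (sigma : {set 'I_m}) : #|sigma| = n ->
  #|[set rho : {set 'I_m} | sigma \subset rho & #|rho| == n + l]| = 'C(m - n, l).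
Proof.
move=> hs.
have hc : #|~: sigma| = (m - n)%N by have H := cardsC sigma; rewrite card_ord hs in H; rewrite -[in RHS]H addKn.
rewrite -hc -cards_draws.
have Hinj : {in [set tau : {set 'I_m} | tau \subset ~: sigma & #|tau| == l] &,
             injective (fun tau => tau :|: sigma)}.
  move=> t1 t2; rewrite !inE => /andP[/subsetP h1 _] /andP[/subsetP h2 _] E.
  apply/setP => x; have := congr1 (fun A : {set 'I_m} => x \in A) E; rewrite /= !inE.
  case xs: (x \in sigma); last by rewrite !orbF.
  move=> _; apply/idP/idP => [/h1|/h2]; by rewrite inE xs.
rewrite -(card_in_imset Hinj); apply: eq_card => rho; rewrite inE.
apply/idP/imsetP => [/andP[sr /eqP cr]|[tau]].
  exists (rho :\: sigma).
    rewrite inE; apply/andP; split.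
      by apply/subsetP => x; rewrite !inE => /andP[].
    by rewrite cardsDS // cr hs addKn.
  apply/setP => x; rewrite !inE; case xs: (x \in sigma) => /=.
    by rewrite (subsetP sr _ xs).
  by rewrite orbF.
rewrite inE => /andP[ts /eqP ct] ->; apply/andP; split; first exact: subsetUr.
have I0 : tau :&: sigma = set0.
  apply/setP => x; rewrite !inE; case xt: (x \in tau) => //=.
  by have := subsetP ts x xt; rewrite inE => /negbTE.
by rewrite cardsU I0 cards0 subn0 ct hs addnC.
Qed.

Theorem lemma4p13 (k : fieldType) (n m : nat) (sigma : {set 'I_m}) (l : nat) :
  (n <= m)%N -> #|sigma| = n -> (1 <= l)%N ->
  \rank (q_mx k n m l sigma) = ('C(n + l - 1, l) * 'C(m - n, l))%N.
Proof.
move=> hnm hs hl.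
rewrite rank_disj; last first.
  move=> a a' b; rewrite !mxE !coef_nz => /andP[s1 L1] /andP[s2 L2].
  have [ea et] := Lset_uniq _ _ _ _ _ _ _ _ L1 L2.
  apply: enum_val_inj; apply: val_inj.
  rewrite [val (enum_val a)]surjective_pairing [val (enum_val a')]surjective_pairing.
  by rewrite ea (rho_eq _ _ _ _ s1 s2 et).
have E a : [exists b, q_mx k n m l sigma a b != 0] = (sigma \subset (val (enum_val a)).2).
  apply/existsP/idP => [[b]|Hs]; first by rewrite mxE coef_nz => /andP[].
  move: (valP (enum_val a)) Hs; case E: (val (enum_val a)) => [al rho] /andP[/eqP sa /eqP cr] /= Hs.
  have [L [H1 H2]] := @exL n m (fun i => (al i : nat)) (rho :\: sigma) 
    ltac:(by rewrite cardsDS // cr hs sa addKn).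
  have HL : in_Lset n m l al (rho :\: sigma) L.
    by apply/andP; split; apply/forallP => x; rewrite ?H1 ?H2.
  have HC : cod_ok n m l sigma L.
    apply/andP; split.
      by rewrite card_fiber_sum (eq_bigr _ (fun i _ => H2 i)) sa.
    apply/forallP => -[i j]; apply/implyP => Hij /=.
    have : j \in rho :\: sigma.
      have := H1 j; case: (j \in rho :\: sigma) => //= /cards0_eq /setP /(_ i).
      by rewrite !inE Hij.
    by rewrite inE => /andP[].
  exists (enum_rank (exist _ L HC : cod_idx n m l sigma)).
  by rewrite mxE enum_rankK /= E /= coef_nz Hs HL.
have -> : [set a | [exists b, q_mx k n m l sigma a b != 0]] =
          [set a : 'I_#|{: dom_idx n m l}| | sigma \subset (val (enum_val a)).2] by apply/setP => a; rewrite !inE E.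
rewrite (card_enum_val _ (fun x : dom_idx n m l => sigma \subset (val x).2)).
rewrite (card_sub_set _ (dom_ok n m l) (fun p => sigma \subset p.2)).
have -> : [set x | dom_ok n m l x && (sigma \subset x.2)] =
  setX [set al : {ffun 'I_n -> 'I_l.+1} | (\sum_i (al i : nat))%N == l]
       [set rho : {set 'I_m} | sigma \subset rho & #|rho| == n + l].
  apply/setP => -[al rho]; rewrite !inE /dom_ok /= -andbA; congr (_ && _).
  by rewrite andbC.
by rewrite cardsX card_alpha // (card_rho _ _ _ _ hs).
Qed.
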